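(* There exist a proper $r\in[0,1]$ and a sequence $x\in\mathsf{MLR}_{\mu_r}$ such that $x$ is continuously proper but $r$ is not continuously proper.
   Context: For $p\in[0,1]$ the Bernoulli measure $\mu_p$ on $2^\omega$ is determined by $\mu_p(\llbracket\sigma\rrbracket)=p^{\#_0(\sigma)}(1-p)^{\#_1(\sigma)}$, where $\#_i(\sigma)$ is the number of occurrences of $i$ in $\sigma$. A real $p\in[0,1]$ is identified with its binary expansion in $2^\omega$, and measures on $[0,1]$ with measures on $2^\omega$. $\mathsf{MLR}_{\mu_p}$ is the set of sequences Martin-Löf random for $\mu_p$ relative to the oracle $p$. A sequence/real is proper if it is Martin-Löf random with respect to some computable measure, and continuously proper if it is Martin-Löf random with respect to some computable measure $\mu$ with $\mu(\{z\})=0$ for all $z$. *)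

(* Defs.v *)
From Stdlib Require Import Reals List Arith.
Import ListNotations.
Open Scope R_scope.

Inductive code : Type :=
| CZero
| CSucc
| CProj (i : nat)
| COracle
| CComp (f : code) (gs : list code)
| CPrec (f g : code)
| CMu (f : code).

Inductive eval (O : nat -> nat) : code -> list nat -> nat -> Prop :=
| e_zero args : eval O CZero args 0
| e_succ args : eval O CSucc args (S (hd 0%nat args))
| e_proj i args : eval O (CProj i) args (nth i args 0%nat)
| e_oracle args : eval O COracle args (O (hd 0%nat args))
| e_comp f gs args ys y :
    evals O gs args ys -> eval O f ys y -> eval O (CComp f gs) args y
| e_prec0 f g args y :
    eval O f args y -> eval O (CPrec f g) (0%nat :: args) y
| e_precS f g n args z y :
    eval O (CPrec f g) (n :: args) z -> eval O g (n :: z :: args) y ->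
    eval O (CPrec f g) (S n :: args) y
| e_mu f args y :
    eval O f (y :: args) 0%nat ->
    (forall z, (z < y)%nat -> exists v, v <> 0%nat /\ eval O f (z :: args) v) ->
    eval O (CMu f) args y
with evals (O : nat -> nat) : list code -> list nat -> list nat -> Prop :=
| es_nil args : evals O [] args []
| es_cons g gs args y ys :
    eval O g args y -> evals O gs args ys -> evals O (g :: gs) args (y :: ys).

(** The empty oracle (unrelativised computation). *)
Definition O0 : nat -> nat := fun _ => 0%nat.

Definition oracle_of (b : nat -> bool) : nat -> nat :=
  fun n => if b n then 1%nat else 0%nat.

(** Bijective coding of binary strings by naturals. *)
Fixpoint str_code (s : list bool) : nat :=
  match s with
  | [] => 0%nat
  | b :: s' => S (2 * str_code s' + (if b then 1 else 0))%nat
  end.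

Definition npair (a b : nat) : nat := ((a + b) * (a + b + 1) / 2 + b)%nat.

Definition zdec (a : nat) : Z :=
  if Nat.even a then Z.of_nat (a / 2) else (- Z.of_nat ((a + 1) / 2))%Z.

(** The rational coded by [npair a b] is [zdec a / (b+1)]. *)
Definition rat_val (a b : nat) : R := IZR (zdec a) / INR (S b).

Definition extends (x : nat -> bool) (s : list bool) : Prop :=
  forall i, (i < length s)%nat -> x i = nth i s false.

Definition is_prefix (s t : list bool) : Prop := exists u, t = s ++ u.

Definition init_seg (x : nat -> bool) (n : nat) : list bool := map x (seq 0 n).

(** A (Borel probability) measure on 2^omega, given by its values on cylinders. *)
Definition is_measure (m : list bool -> R) : Prop :=
  m [] = 1 /\ (forall s, 0 <= m s) /\
  (forall s, m s = m (s ++ [false]) + m (s ++ [true])).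

Fixpoint count_b (c : bool) (s : list bool) : nat :=
  match s with
  | [] => 0%nat
  | b :: s' => if Bool.eqb b c then S (count_b c s') else count_b c s'
  end.

Definition bernoulli (p : R) (s : list bool) : R :=
  p ^ count_b false s * (1 - p) ^ count_b true s.

Fixpoint sumR (l : list R) : R :=
  match l with [] => 0 | a :: l' => a + sumR l' end.

(** m([[W]]) <= c, where [[W]] is the open set generated by the set of strings W
    (measure of [[W]] = sup over n of the mass of length-n strings extending
    some element of W). *)
Definition open_meas_le (m : list bool -> R) (W : list bool -> Prop) (c : R) : Prop :=
  forall (n : nat) (L : list (list bool)),
    NoDup L ->
    (forall t, In t L -> length t = n /\ exists s, W s /\ is_prefix s t) ->
    sumR (map m L) <= c.

Definition atomless (m : list bool -> R) : Prop :=
  forall (z : nat -> bool) (eps : R), eps > 0 ->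
    exists n, m (init_seg z n) < eps.

(** Computable measure: sigma |-> m([sigma]) is uniformly computable
    (rational 2^-n approximations, rationals coded via npair). *)
Definition computable_measure (m : list bool -> R) : Prop :=
  exists e : code, forall (s : list bool) (n : nat),
    exists a b, eval O0 e [str_code s; n] (npair a b) /\
                Rabs (rat_val a b - m s) <= (/2) ^ n.

(** The k-th level of the oracle-c.e. (domain of program e) sequence of sets. *)
Definition level (O : nat -> nat) (e : code) (k : nat) (s : list bool) : Prop :=
  exists y, eval O e [k; str_code s] y.

Definition MLR (O : nat -> nat) (m : list bool -> R) (x : nat -> bool) : Prop :=
  forall e : code,
    (forall k, open_meas_le m (level O e k) ((/2) ^ k)) ->
    ~ (forall k, exists s, level O e k s /\ extends x s).

Definition proper (x : nat -> bool) : Prop :=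
  exists m, is_measure m /\ computable_measure m /\ MLR O0 m x.

Definition continuously_proper (x : nat -> bool) : Prop :=
  exists m, is_measure m /\ computable_measure m /\ atomless m /\ MLR O0 m x.

Fixpoint bin_partial (b : nat -> bool) (n : nat) : R :=
  match n with
  | O => 0
  | S k => bin_partial b k + (if b k then (/2) ^ (S k) else 0)
  end.

Definition binary_expansion (r : R) (b : nat -> bool) : Prop :=
  forall n, bin_partial b n <= r <= bin_partial b n + (/2) ^ n.

(* Main.v *)
Require Import Defs.
From Stdlib Require Import Reals Lra Lia List Arith Bool Classical ClassicalEpsilon FinFun Cantor.
Import ListNotations.

Open Scope R_scope.

Lemma sumR_app (l1 l2 : list R) : sumR (l1 ++ l2) = sumR l1 + sumR l2.
Proof. induction l1; simpl; [lra|rewrite IHl1; lra]. Qed.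

Lemma sumR_flat_map {A B} (m : B -> R) (f : A -> list B) (l : list A) :
  sumR (map m (flat_map f l)) = sumR (map (fun a => sumR (map m (f a))) l).
Proof. induction l; simpl; [lra|]. rewrite map_app, sumR_app, IHl. lra. Qed.

Fixpoint allstr (k : nat) : list (list bool) :=
  match k with
  | O => [[]]
  | S k' => flat_map (fun w => [w ++ [false]; w ++ [true]]) (allstr k')
  end.

Lemma allstr_sum (m : list bool -> R) (Hm : is_measure m) u k :
  sumR (map (fun w => m (u ++ w)) (allstr k)) = m u.
Proof.
  destruct Hm as (_ & _ & Hadd).
  induction k; simpl. { rewrite app_nil_r. lra. }
  rewrite sumR_flat_map. rewrite <- IHk. f_equal.
  apply map_ext. intro w. simpl. rewrite (Hadd (u ++ w)), !app_assoc. lra.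
Qed.

Lemma allstr_len k w : In w (allstr k) -> length w = k.
Proof.
  revert w; induction k; simpl; intros w H.
  - destruct H as [<-|[]]; reflexivity.
  - apply in_flat_map in H as (w' & Hw' & H).
    simpl in H. destruct H as [<-|[<-|[]]]; rewrite length_app, IHk by auto; simpl; lia.
Qed.

Lemma NoDup_flat_map' {A B} (f : A -> list B) (l : list A) :
  NoDup l -> (forall x, In x l -> NoDup (f x)) ->
  (forall x y z, In x l -> In y l -> In z (f x) -> In z (f y) -> x = y) ->
  NoDup (flat_map f l).
Proof.
  induction l as [|a l IH]; simpl; intros Hl Hf Hd. constructor. inversion Hl; subst. apply NoDup_app.
  - apply Hf; auto.
  - apply IH; auto. intros x y z Hx Hy. apply Hd; auto.
  - intros z Hz Hz'. apply in_flat_map in Hz' as (y & Hy & Hzy).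
  assert (a = y) by (apply (Hd a y z); auto). subst. contradiction.
Qed.

Lemma app_same_len_inv (u u' w w' : list bool) :
  length u = length u' -> u ++ w = u' ++ w' -> u = u' /\ w = w'.
Proof.
  revert u'; induction u; intros [|b u'] Hl H; simpl in *; try discriminate; auto.
  injection H as -> H. injection Hl as Hl. destruct (IHu u' Hl H). subst; auto.
Qed.

Lemma allstr_NoDup k : NoDup (allstr k).
Proof.
  induction k; simpl. repeat constructor; simpl; tauto.
  apply NoDup_flat_map'; auto.
  - intros w _. constructor. simpl. intros [H|[]].
    apply app_inv_head in H. discriminate. repeat constructor. simpl; tauto.
  - intros x y z Hx Hy Hzx Hzy. simpl in *.
    assert (Hl : length x = length y) by (rewrite (allstr_len k x), (allstr_len k y); auto).
    destruct Hzx as [<-|[<-|[]]]; destruct Hzy as [H|[H|[]]];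
      (apply app_same_len_inv in H; [symmetry; tauto|]); lia.
Qed.

Definition pad (L : list (list bool)) k := flat_map (fun u => map (fun w => u ++ w) (allstr k)) L.

Lemma pad_in L k v : In v (pad L k) -> exists u w, In u L /\ length w = k /\ v = u ++ w.
Proof.
  unfold pad. intro H. apply in_flat_map in H as (u & Hu & H).
  apply in_map_iff in H as (w & <- & Hw). exists u, w. split; auto. split; auto.
  apply allstr_len; auto.
Qed.

Lemma pad_NoDup L k n : NoDup L -> (forall u, In u L -> length u = n) -> NoDup (pad L k).
Proof.
  intros HL Hn. apply NoDup_flat_map'; auto.
  - intros x _. apply FinFun.Injective_map_NoDup. intros a b H. apply app_inv_head in H; auto.
    apply allstr_NoDup.
  - intros x y z Hx Hy Hzx Hzy.
    apply in_map_iff in Hzx as (w & <- & _). apply in_map_iff in Hzy as (w' & H & _).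
    apply app_same_len_inv in H. symmetry; tauto. rewrite !Hn; auto.
Qed.

Lemma pad_sum m (Hm : is_measure m) L k : sumR (map m (pad L k)) = sumR (map m L).
Proof.
  unfold pad. rewrite sumR_flat_map. f_equal. apply map_ext. intro u.
  rewrite map_map. apply allstr_sum; auto.
Qed.

Lemma prefix_trans s t u : is_prefix s t -> is_prefix t u -> is_prefix s u.
Proof. intros [a ->] [b ->]. exists (a ++ b). rewrite app_assoc; auto. Qed.

Lemma prefix_len s t : is_prefix s t -> (length s <= length t)%nat.
Proof. intros [a ->]. rewrite length_app. lia. Qed.

Definition covL (V : list bool -> Prop) (t : list bool) (n : nat) (L : list (list bool)) :=
  NoDup L /\ forall u, In u L -> length u = n /\ is_prefix t u /\ exists s, V s /\ is_prefix s u.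

Definition Good (m : list bool -> R) (V : list bool -> Prop) (t : list bool) :=
  exists d, d > 0 /\ forall n L, covL V t n L -> sumR (map m L) <= m t - d.

Lemma good_child m (Hm : is_measure m) V t :
  Good m V t -> Good m V (t ++ [false]) \/ Good m V (t ++ [true]).
Proof.
  intros [d [Hd HG]]. apply NNPP. intro Hn. apply not_or_and in Hn as [H0 H1].
  assert (Hbad : forall c, ~ Good m V (t ++ [c]) -> exists n L, covL V (t ++ [c]) n L /\
             sumR (map m L) > m (t ++ [c]) - d / 2).
  { intros c Hc. apply NNPP. intro Hx. apply Hc. exists (d/2). split. lra.
    intros n L HL. apply Rnot_gt_le. intro Hgt. apply Hx. exists n, L. auto. }
  destruct (Hbad _ H0) as (n0 & L0 & [HN0 HC0] & HS0).
  destruct (Hbad _ H1) as (n1 & L1 & [HN1 HC1] & HS1).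
  assert (HL : covL V t (n0 + n1) (pad L0 n1 ++ pad L1 n0)).
  { split.
    - apply NoDup_app.
      + apply (pad_NoDup _ _ n0); auto. intros u Hu; apply HC0; auto.
      + apply (pad_NoDup _ _ n1); auto. intros u Hu; apply HC1; auto.
      + intros a Ha Ha'. apply pad_in in Ha as (u & w & Hu & _ & ->).
        apply pad_in in Ha' as (u' & w' & Hu' & _ & Heq).
        destruct (HC0 u Hu) as (_ & [p ->] & _). destruct (HC1 u' Hu') as (_ & [p' ->] & _).
        rewrite <- !app_assoc in Heq. apply app_inv_head in Heq. discriminate.
    - intros v Hv. apply in_app_or in Hv as [Hv|Hv];
        apply pad_in in Hv as (u & w & Hu & Hw & ->).
      + destruct (HC0 u Hu) as (Hl & Hp & s & Vs & Hs). rewrite length_app. split. lia.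
        split. apply (prefix_trans _ (t ++ [false])). exists [false]; auto.
        apply (prefix_trans _ u); auto. exists w; auto.
        exists s. split; auto. apply (prefix_trans _ u); auto. exists w; auto.
      + destruct (HC1 u Hu) as (Hl & Hp & s & Vs & Hs). rewrite length_app. split. lia.
        split. apply (prefix_trans _ (t ++ [true])). exists [true]; auto.
        apply (prefix_trans _ u); auto. exists w; auto.
        exists s. split; auto. apply (prefix_trans _ u); auto. exists w; auto. }
  specialize (HG _ _ HL). rewrite map_app, sumR_app, !pad_sum in HG by auto.
  destruct Hm as (_ & _ & Hadd). rewrite (Hadd t) in HG. lra.
Qed.

Definition choose_bit m V (t : list bool) : bool :=
  if excluded_middle_informative (Good m V (t ++ [false])) then false else true.

Fixpoint gpath m V (n : nat) : list bool :=
  match n with O => [] | S k => gpath m V k ++ [choose_bit m V (gpath m V k)] end.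

Lemma gpath_good m (Hm : is_measure m) V : Good m V [] -> forall n, Good m V (gpath m V n).
Proof.
  intros H0 n; induction n; simpl; auto. unfold choose_bit.
  destruct excluded_middle_informative; auto.
  destruct (good_child m Hm V _ IHn); tauto.
Qed.

Lemma gpath_seg m V n : init_seg (fun i => choose_bit m V (gpath m V i)) n = gpath m V n.
Proof.
  induction n; auto. unfold init_seg in *. rewrite seq_S, map_app, IHn. reflexivity.
Qed.

Lemma extends_seg x s : extends x s -> init_seg x (length s) = s.
Proof.
  intros H. unfold init_seg. apply nth_ext with (d := false) (d' := false).
  - rewrite length_map, length_seq; auto.
  - intros i Hi. rewrite length_map, length_seq in Hi.
    rewrite (nth_indep _ false (x 0%nat)) by (rewrite length_map, length_seq; auto).
    rewrite map_nth, seq_nth by auto. simpl. apply H; auto.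
Qed.

Lemma avoid_exists m (Hm : is_measure m) V :
  (forall n L, covL V [] n L -> sumR (map m L) <= /2) ->
  exists x, forall s, V s -> ~ extends x s.
Proof.
  intros HV. assert (G0 : Good m V []).
  { exists (/2). split. lra. intros n L HL. destruct Hm as [-> _]. specialize (HV n L HL). lra. }
  exists (fun i => choose_bit m V (gpath m V i)). intros s Vs Hx.
  apply extends_seg in Hx. rewrite gpath_seg in Hx.
  destruct (gpath_good m Hm V G0 (length s)) as [d [Hd HG]]. rewrite Hx in HG.
  assert (HL : covL V s (length s) [s]).
  { split. repeat constructor. simpl; tauto. intros u [<-|[]]. split; auto.
    split. exists []; rewrite app_nil_r; auto. exists s; split; auto. exists []; rewrite app_nil_r; auto. }
  specialize (HG _ _ HL). simpl in HG. lra.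
Qed.

Open Scope R_scope.

Fixpoint geo (N : nat) : R := match N with O => 0 | S k => geo k + (/2) ^ (S (S k)) end.

Lemma geo_val N : geo N = /2 - (/2) ^ (S N).
Proof. induction N; simpl in *. lra. rewrite IHN. lra. Qed.

Lemma sumR_filter {A} (m : A -> R) f (L : list A) :
  sumR (map m L) = sumR (map m (filter f L)) + sumR (map m (filter (fun x => negb (f x)) L)).
Proof. induction L; simpl. lra. destruct (f a); simpl; rewrite IHL; lra. Qed.

Lemma union_bound_N m (W : nat -> list bool -> Prop)
  (HW : forall j, open_meas_le m (W j) ((/2) ^ (S (S j)))) :
  forall N n L, NoDup L ->
   (forall u, In u L -> length u = n /\ exists j, (j < N)%nat /\ exists s, W j s /\ is_prefix s u) ->
   sumR (map m L) <= geo N.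
Proof.
  induction N; intros n L HN HL.
  - destruct L as [|u L]. simpl; lra. destruct (HL u (or_introl eq_refl)) as (_ & j & Hj & _). lia.
  - set (f := fun u => if excluded_middle_informative (exists s, W N s /\ is_prefix s u) then true else false).
    rewrite (sumR_filter m f). change (geo (S N)) with (geo N + (/2) ^ (S (S N))).
    assert (H1 : sumR (map m (filter f L)) <= (/2) ^ (S (S N))).
    { apply (HW N n). apply NoDup_filter; auto. intros t Ht. apply filter_In in Ht as [Ht Hf].
      unfold f in Hf. destruct excluded_middle_informative; try discriminate.
      split; auto. apply HL; auto. }
    assert (H2 : sumR (map m (filter (fun x => negb (f x)) L)) <= geo N).
    { apply (IHN n). apply NoDup_filter; auto. intros t Ht. apply filter_In in Ht as [Ht Hf].
      unfold f in Hf. destruct excluded_middle_informative as [|Hn]; try discriminate.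
      destruct (HL t Ht) as (Hl & j & Hj & s & Ws & Hs). split; auto. exists j.
      split; [|eauto]. destruct (Nat.eq_dec j N). subst. exfalso. apply Hn. eauto. lia. }
    lra.
Qed.

Lemma union_bound m (W : nat -> list bool -> Prop)
  (HW : forall j, open_meas_le m (W j) ((/2) ^ (S (S j)))) :
  forall n L, covL (fun s => exists j, W j s) [] n L -> sumR (map m L) <= /2.
Proof.
  intros n L [HN HL].
  assert (HB : exists N, forall u, In u L -> length u = n /\ exists j, (j < N)%nat /\ exists s, W j s /\ is_prefix s u).
  { clear HN. induction L as [|a L IH].
    - exists O. intros u [].
    - destruct IH as [N HN]. intros u Hu; apply HL; simpl; auto.
      destruct (HL a (or_introl eq_refl)) as (Hl & _ & s & [j Ws] & Hs).
      exists (S (Nat.max N j)). intros u [<-|Hu].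
      + split; auto. exists j. split. lia. eauto.
      + destruct (HN u Hu) as (Hl' & j' & Hj' & Hs'). split; auto. exists j'. split; auto. lia. }
  destruct HB as [N HB]. pose proof (union_bound_N m W HW N n L HN HB).
  rewrite geo_val in H. pose proof (pow_lt (/2) (S N)). lra.
Qed.

Open Scope R_scope.

Definition code_ind' (P : code -> Prop)
  (H0 : P CZero) (H1 : P CSucc) (H2 : forall i, P (CProj i)) (H3 : P COracle)
  (H4 : forall f gs, P f -> Forall P gs -> P (CComp f gs))
  (H5 : forall f g, P f -> P g -> P (CPrec f g))
  (H6 : forall f, P f -> P (CMu f)) : forall c, P c :=
  fix F c := match c with
  | CZero => H0 | CSucc => H1 | CProj i => H2 i | COracle => H3
  | CComp f gs => H4 f gs (F f)
      ((fix G l := match l return Forall P l with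
                   | [] => Forall_nil _ | g :: l' => Forall_cons _ (F g) (G l') end) gs)
  | CPrec f g => H5 f g (F f) (F g)
  | CMu f => H6 f (F f)
  end.

Arguments to_nat : simpl never.
Fixpoint enc (c : code) : nat :=
  match c with
  | CZero => to_nat (0, 0)%nat
  | CSucc => to_nat (1, 0)%nat
  | CProj i => to_nat (2, i)%nat
  | COracle => to_nat (3, 0)%nat
  | CComp f gs => to_nat (4, to_nat (enc f,
       (fix encl l := match l with [] => 0 | g :: l' => S (to_nat (enc g, encl l')) end) gs))%nat
  | CPrec f g => to_nat (5, to_nat (enc f, enc g))%nat
  | CMu f => to_nat (6, enc f)%nat
  end.

Lemma enc_inj : forall c c', enc c = enc c' -> c = c'.
Proof.
  induction c using code_ind'; intros [] Heq; simpl in Heq;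
    apply to_nat_inj in Heq; try discriminate; try (injection Heq; intros; subst); auto.
  all: try (match goal with H : to_nat _ = to_nat _ |- _ => apply to_nat_inj in H; injection H as E1 E2 end).
  - f_equal; auto.
    match goal with HF : Forall _ _ |- _ => clear - HF E2; revert gs0 E2; induction HF end; intros [|g' l'] Hl; try discriminate; auto.
    injection Hl as Hl. apply to_nat_inj in Hl. injection Hl as Hl Hl'. f_equal; auto.
  - f_equal; auto.
  - f_equal; auto.
Qed.


Lemma count_len s : (count_b false s + count_b true s)%nat = length s.
Proof. induction s as [|[] s IH]; simpl; lia. Qed.

Lemma bern_half s : bernoulli (/2) s = (/2) ^ (length s).
Proof.
  unfold bernoulli. replace (1 - /2) with (/2) by lra. rewrite <- pow_add, count_len. auto.
Qed.

Lemma bern_half_measure : is_measure (bernoulli (/2)).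
Proof.
  split; [|split].
  - rewrite bern_half. simpl. lra.
  - intros s. rewrite bern_half. apply pow_le; lra.
  - intros s. rewrite !bern_half, !length_app. simpl. rewrite Nat.add_1_r. simpl. lra.
Qed.

Definition UT (O : nat -> nat) (e : code) :=
  forall k, open_meas_le (bernoulli (/2)) (level O e k) ((/2) ^ k).

Definition orc (b : nat -> bool) (o : bool) := if o then oracle_of b else O0.

Definition Wfam (b : nat -> bool) (j : nat) (s : list bool) : Prop :=
  exists e (o : bool), j = (2 * enc e + (if o then 1 else 0))%nat /\ UT (orc b o) e /\
              level (orc b o) e (S (S j)) s.

Lemma open_meas_mono m (W W' : list bool -> Prop) c :
  (forall s, W s -> W' s) -> open_meas_le m W' c -> open_meas_le m W c.
Proof.
  intros HW H n L HN HL. apply (H n L HN). intros t Ht. destruct (HL t Ht) as (? & s & ? & ?).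
  split; auto. exists s; auto.
Qed.

Lemma Wfam_bound b j : open_meas_le (bernoulli (/2)) (Wfam b j) ((/2) ^ (S (S j))).
Proof.
  intros n [|a L] HN HL. { cbn [map sumR]. pose proof (pow_lt (/2) (S (S j)) ltac:(lra)). lra. }
  destruct (HL a (or_introl eq_refl)) as (_ & s & (e & o & Hj & HU & _) & _).
  apply (HU (S (S j)) n (a :: L) HN). intros t Ht.
  destruct (HL t Ht) as (Hlen & s' & (e' & o' & Hj' & _ & Hl) & Hp). split; auto. exists s'. split; auto.
  assert (enc e = enc e' /\ o = o') as [He ->].
  { destruct o, o'; split; auto; lia. }
  apply enc_inj in He. subst. auto.
Qed.

Lemma random_exists b : exists x,
  MLR O0 (bernoulli (/2)) x /\ MLR (oracle_of b) (bernoulli (/2)) x.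
Proof.
  destruct (avoid_exists _ bern_half_measure (fun s => exists j, Wfam b j s)) as [x Hx].
  { apply union_bound. apply Wfam_bound. }
  exists x. split.
  - intros e HT Hc. destruct (Hc (S (S (2 * enc e + 0)))) as (s & Hs & Hxs).
    apply (Hx s); auto. exists (2 * enc e + 0)%nat, e, false. split; auto.
  - intros e HT Hc. destruct (Hc (S (S (2 * enc e + 1)))) as (s & Hs & Hxs).
    apply (Hx s); auto. exists (2 * enc e + 1)%nat, e, true. split; auto.
Qed.

Close Scope R_scope.

Definition det O c := forall args y y', eval O c args y -> eval O c args y' -> y = y'.

Lemma evals_det O gs :
  Forall (det O) gs ->
  forall args ys ys', evals O gs args ys -> evals O gs args ys' -> ys = ys'.
Proof.
  induction 1; intros args ys ys' H1 H2; inversion H1; inversion H2; subst; auto.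
  f_equal; eauto.
Qed.

Lemma prec_det O f g : det O f -> det O g -> forall n rest y y',
  eval O (CPrec f g) (n :: rest) y -> eval O (CPrec f g) (n :: rest) y' -> y = y'.
Proof.
  intros Hf Hg n; induction n; intros rest y y' H1 H2.
  - inversion H1; subst. inversion H2; subst. eauto.
  - inversion H1; subst. inversion H2; subst.
    assert (z = z0) by eauto. subst. eauto.
Qed.

Lemma eval_det O : forall c, det O c.
Proof.
  induction c using code_ind'; intros args y y' H1 H2.
  - inversion H1; inversion H2; subst; auto.
  - inversion H1; inversion H2; subst; auto.
  - inversion H1; inversion H2; subst; auto.
  - inversion H1; inversion H2; subst; auto.
  - inversion H1; subst. inversion H2; subst.
    assert (ys = ys0) by (eapply evals_det; eauto). subst. eapply IHc; eauto.
  - destruct args as [|n rest]. inversion H1. exact (prec_det O c1 c2 IHc1 IHc2 n rest y y' H1 H2).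
  - inversion H1; subst. inversion H2; subst.
    destruct (Nat.lt_trichotomy y y') as [Hl|[Hl|Hl]]; auto.
    + match goal with H : forall z, (z < y')%nat -> _ |- _ => destruct (H _ Hl) as (v & Hv & Ev) end.
      match goal with H : eval O _ (y :: args) 0%nat |- _ => specialize (IHc _ _ _ H Ev) end. congruence.
    + match goal with H : forall z, (z < y)%nat -> _ |- _ => destruct (H _ Hl) as (v & Hv & Ev) end.
      match goal with H : eval O _ (y' :: args) 0%nat |- _ => specialize (IHc _ _ _ H Ev) end. congruence.
Qed.

Close Scope R_scope.


Lemma ev_eq O c l y y' : eval O c l y -> y = y' -> eval O c l y'.
Proof. intros H <-; exact H. Qed.

Lemma ev_comp1 O f g args y z : eval O g args y -> eval O f [y] z -> eval O (CComp f [g]) args z.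
Proof. intros; econstructor; [repeat econstructor; eauto | eauto]. Qed.
Lemma ev_comp2 O f g1 g2 args y1 y2 z : eval O g1 args y1 -> eval O g2 args y2 ->
  eval O f [y1; y2] z -> eval O (CComp f [g1; g2]) args z.
Proof. intros; econstructor; [repeat econstructor; eauto | eauto]. Qed.

Lemma prec_eval O f g rest (R : nat -> nat) : eval O f rest (R 0) ->
  (forall i, eval O g (i :: R i :: rest) (R (S i))) -> forall n, eval O (CPrec f g) (n :: rest) (R n).
Proof. intros H0 HS n; induction n. constructor; auto. econstructor; eauto. Qed.

Definition one := CComp CSucc [CZero].
Lemma ev_one O l : eval O one l 1.
Proof. eapply ev_comp1. constructor. constructor. Qed.

Ltac ev0 := first [ apply ev_one | eapply ev_comp1 | eapply ev_comp2 | apply e_proj | apply e_zero | apply e_succ ].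

Definition cADD := CComp (CPrec (CProj 0) (CComp CSucc [CProj 1])) [CProj 0; CProj 1].
Lemma ADD O x y l : eval O cADD (x :: y :: l) (x + y).
Proof.
  eapply ev_comp2; [apply e_proj | apply e_proj|]. simpl.
  apply (prec_eval O _ _ [y] (fun n => n + y)). apply e_proj.
  intro i. eapply ev_comp1. apply e_proj. apply e_succ.
Qed.

Definition cMUL := CComp (CPrec CZero (CComp cADD [CProj 1; CProj 2])) [CProj 0; CProj 1].
Lemma MUL O x y l : eval O cMUL (x :: y :: l) (x * y).
Proof.
  eapply ev_comp2; [apply e_proj | apply e_proj|]. simpl.
  apply (prec_eval O _ _ [y] (fun n => n * y)). apply e_zero.
  intro i. eapply ev_eq. eapply ev_comp2; [apply e_proj | apply e_proj| apply ADD]. simpl. lia.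
Qed.

Definition cPRED := CComp (CPrec CZero (CProj 0)) [CProj 0].
Lemma PRED O x l : eval O cPRED (x :: l) (Nat.pred x).
Proof.
  eapply ev_comp1; [apply e_proj|]. simpl.
  apply (prec_eval O _ _ [] Nat.pred). apply e_zero. intro i. apply e_proj.
Qed.

Definition cSUB := CComp (CPrec (CProj 0) (CComp cPRED [CProj 1])) [CProj 1; CProj 0].
Lemma SUB O x y l : eval O cSUB (x :: y :: l) (x - y).
Proof.
  eapply ev_comp2; [apply e_proj | apply e_proj|]. simpl.
  apply (prec_eval O _ _ [x] (fun n => x - n)). eapply ev_eq. apply e_proj. simpl; lia.
  intro i. eapply ev_eq. eapply ev_comp1; [apply e_proj | apply PRED]. simpl. lia.
Qed.

Ltac ev := repeat first [ apply ADD | apply MUL | apply PRED | apply SUB | ev0 ].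

Definition cEQ := CComp cSUB [one; CComp cADD [CComp cSUB [CProj 0; CProj 1]; CComp cSUB [CProj 1; CProj 0]]].
Lemma EQ O x y l : eval O cEQ (x :: y :: l) (Nat.b2n (x =? y)).
Proof. eapply ev_eq. unfold cEQ; ev. cbn [nth hd]. destruct (Nat.eqb_spec x y); cbn [Nat.b2n]; lia. Qed.

Definition cLE := CComp cSUB [one; CComp cSUB [CProj 0; CProj 1]].
Lemma LE O x y l : eval O cLE (x :: y :: l) (Nat.b2n (x <=? y)).
Proof. eapply ev_eq. unfold cLE; ev. cbn [nth hd]. destruct (Nat.leb_spec x y); cbn [Nat.b2n]; lia. Qed.

Definition cPOW2 := CComp (CPrec one (CComp cADD [CProj 1; CProj 1])) [CProj 0].
Lemma POW2 O x l : eval O cPOW2 (x :: l) (2 ^ x).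
Proof.
  eapply ev_comp1; [apply e_proj|]. simpl.
  apply (prec_eval O _ _ [] (fun n => 2 ^ n)). apply ev_one.
  intro i. eapply ev_eq. ev. simpl. lia.
Qed.

Fixpoint tri (n : nat) : nat := match n with O => 0 | S k => tri k + S k end.
Definition cTRI := CComp (CPrec CZero (CComp cADD [CProj 1; CComp CSucc [CProj 0]])) [CProj 0].
Lemma TRI O x l : eval O cTRI (x :: l) (tri x).
Proof.
  eapply ev_comp1; [apply e_proj|]. simpl.
  apply (prec_eval O _ _ [] tri). apply e_zero.
  intro i. eapply ev_eq. ev. simpl. lia.
Qed.

Ltac ev2 := repeat first [ apply ADD | apply MUL | apply PRED | apply SUB | apply EQ | apply LE
   | apply POW2 | apply TRI | ev0 ].

Fixpoint gf (n : nat) : nat := match n with O => 1 | S k => gf k + gf k * Nat.b2n (gf k + gf k =? S (S k)) end.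
Definition cG := CComp (CPrec one (CComp cADD [CProj 1; CComp cMUL [CProj 1;
   CComp cEQ [CComp cADD [CProj 1; CProj 1]; CComp CSucc [CComp CSucc [CProj 0]]]]])) [CProj 0].
Lemma G O x l : eval O cG (x :: l) (gf x).
Proof.
  eapply ev_comp1; [apply e_proj|]. simpl.
  apply (prec_eval O _ _ [] gf). apply ev_one.
  intro i. eapply ev_eq. ev2. simpl. reflexivity.
Qed.

Fixpoint evf (n : nat) : nat := match n with O => 1 | S k => 1 - evf k end.
Definition cEV := CComp (CPrec one (CComp cSUB [one; CProj 1])) [CProj 0].
Lemma EV O x l : eval O cEV (x :: l) (evf x).
Proof.
  eapply ev_comp1; [apply e_proj|]. simpl.
  apply (prec_eval O _ _ [] evf). apply ev_one.
  intro i. eapply ev_eq. ev2. simpl. reflexivity.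
Qed.

Fixpoint sif (n : nat) : nat := match n with O => 0 | S k => sif k + Nat.b2n (tri (S (sif k)) <=? S k) end.
Definition cSI := CComp (CPrec CZero (CComp cADD [CProj 1; CComp cLE [CComp cTRI [CComp CSucc [CProj 1]];
    CComp CSucc [CProj 0]]])) [CProj 0].
Lemma SI O x l : eval O cSI (x :: l) (sif x).
Proof.
  eapply ev_comp1; [apply e_proj|]. simpl.
  apply (prec_eval O _ _ [] sif). apply e_zero.
  intro i. eapply ev_eq. ev2. simpl. reflexivity.
Qed.

Ltac ev3 := repeat first [ apply ADD | apply MUL | apply PRED | apply SUB | apply EQ | apply LE
   | apply POW2 | apply TRI | apply G | apply EV | apply SI | ev0 ].

Definition two := CComp CSucc [one].
Definition three := CComp CSucc [two].
Definition cBp := CComp cSUB [CProj 0; CComp cTRI [CComp cSI [CProj 0]]].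
Definition cAp := CComp cSUB [CComp cSI [CProj 0]; cBp].
Definition condf (y k : nat) : nat :=
  let B := y - tri (sif y) in let A := sif y - B in
  1 - evf A * (1 - Nat.b2n (A * 2 ^ (S k) <=? 3 * S B)).
Definition cCOND := CComp cSUB [one; CComp cMUL [CComp cEV [cAp];
   CComp cSUB [one; CComp cLE [CComp cMUL [cAp; CComp cPOW2 [CComp CSucc [CProj 1]]];
     CComp cMUL [three; CComp CSucc [cBp]]]]]].
Lemma COND O y k l : eval O cCOND (y :: k :: l) (condf y k).
Proof. eapply ev_eq. unfold cCOND, cAp, cBp, three, two; ev3. simpl. reflexivity. Qed.

Definition Pf (c : nat) : nat := Nat.b2n (c =? 0) + Nat.b2n (2 <=? c) * Nat.b2n (gf (Nat.pred c) =? c).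
Definition cP := CComp cADD [CComp cEQ [CProj 0; CZero];
  CComp cMUL [CComp cLE [two; CProj 0]; CComp cEQ [CComp cG [CComp cPRED [CProj 0]]; CProj 0]]].
Lemma Pc O c l : eval O cP (c :: l) (Pf c).
Proof. eapply ev_eq. unfold cP, two; ev3. simpl. reflexivity. Qed.

Definition cDIRAC := CComp cMUL [three; CComp cP [CProj 0]].
Lemma DIRAC O c l : eval O cDIRAC (c :: l) (3 * Pf c).
Proof. eapply ev_eq. unfold cDIRAC, three, two; repeat first [apply MUL | apply Pc | ev0]. simpl. reflexivity. Qed.

Definition cUNI := CComp cSUB [CComp cADD [CComp cTRI [CComp CSucc [CComp cG [CProj 0]]]; CComp cG [CProj 0]]; one].
Lemma UNI O c l : eval O cUNI (c :: l) (tri (S (gf c)) + gf c - 1).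
Proof. eapply ev_eq. unfold cUNI; ev3. simpl. reflexivity. Qed.

Definition cH (em : code) := CComp cSUB [one; CComp cMUL [CComp cP [CProj 2];
  CComp cCOND [CComp em [CProj 2; CComp CSucc [CComp CSucc [CProj 1]]]; CProj 1]]].
Lemma H_ok O em w k c y : eval O em [c; S (S k)] y -> eval O (cH em) [w; k; c] (1 - Pf c * condf y k).
Proof.
  intro He. eapply ev_eq. unfold cH.
  repeat first [ exact He | apply Pc | apply COND | apply SUB | apply MUL | ev0 ].
  simpl. reflexivity.
Qed.

Close Scope R_scope.

Lemma tri2 n : tri n * 2 = n * S n.
Proof. induction n; simpl tri; try lia. Qed.

Lemma npair_tri a b : npair a b = tri (a + b) + b.
Proof.
  unfold npair. f_equal. rewrite Nat.add_1_r, <- tri2. apply Nat.div_mul. lia.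
Qed.

Lemma tri_mono i j : i <= j -> tri i <= tri j.
Proof. induction 1; simpl; lia. Qed.

Lemma sif_spec n : tri (sif n) <= n < tri (S (sif n)).
Proof.
  induction n; [simpl; lia|].
  cbn [sif]. set (s := sif n) in *.
  destruct (Nat.leb_spec (tri (S s)) (S n)); cbn [Nat.b2n].
  - rewrite Nat.add_1_r. change (tri (S (S s))) with (tri (S s) + S (S s)). lia.
  - rewrite Nat.add_0_r. lia.
Qed.

Lemma sif_unique n s : tri s <= n < tri (S s) -> sif n = s.
Proof.
  intros H. pose proof (sif_spec n).
  destruct (Nat.lt_trichotomy (sif n) s) as [Hl|[Hl|Hl]]; auto.
  - pose proof (tri_mono (S (sif n)) s Hl). lia.
  - pose proof (tri_mono (S s) (sif n) Hl). lia.
Qed.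

Lemma sif_npair a b : sif (npair a b) = a + b.
Proof. apply sif_unique. rewrite npair_tri. simpl. lia. Qed.

Lemma evf_even a : evf a = if Nat.even a then 1 else 0.
Proof. induction a; auto. simpl evf. rewrite IHa, Nat.even_succ, <- Nat.negb_even. destruct (Nat.even a); auto. Qed.

Lemma condf_npair a b k : condf (npair a b) k =
  1 - (if Nat.even a then 1 else 0) * (1 - Nat.b2n (a * 2 ^ (S k) <=? 3 * S b)).
Proof.
  unfold condf. rewrite sif_npair, <- evf_even.
  replace (npair a b - tri (a + b)) with b by (rewrite npair_tri; lia).
  replace (a + b - b) with a by lia. reflexivity.
Qed.

Lemma gf_spec n : exists K, gf n = 2 ^ K /\ 2 ^ K <= S n < 2 ^ S K.
Proof.
  induction n. exists 0. simpl; lia.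
  destruct IHn as (K & HK & H1 & H2). simpl gf. rewrite HK.
  destruct (Nat.eqb_spec (2 ^ K + 2 ^ K) (S (S n))); cbn [Nat.b2n].
  - exists (S K). simpl in *. lia.
  - exists K. simpl in *. lia.
Qed.

Lemma pow_unique K L n : 2 ^ K <= n < 2 ^ S K -> 2 ^ L <= n < 2 ^ S L -> K = L.
Proof.
  intros H1 H2. destruct (Nat.lt_trichotomy K L) as [Hl|[Hl|Hl]]; auto.
  - assert (2 ^ S K <= 2 ^ L) by (apply Nat.pow_le_mono_r; lia). lia.
  - assert (2 ^ S L <= 2 ^ K) by (apply Nat.pow_le_mono_r; lia). lia.
Qed.

Lemma code_bound s : 2 ^ length s <= S (str_code s) < 2 ^ S (length s).
Proof. induction s as [|[] s IH]; simpl in *; lia. Qed.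

Lemma gf_code s : gf (str_code s) = 2 ^ length s.
Proof.
  destruct (gf_spec (str_code s)) as (K & HK & H). rewrite HK. f_equal.
  eapply pow_unique; eauto. apply code_bound.
Qed.

Definition allf (t : list bool) := forallb negb t.
Definition prefb (s : list bool) : bool :=
  match s with [] => true | true :: t => allf t | false :: _ => false end.

Lemma allf_code t : allf t = true <-> S (str_code t) = 2 ^ length t.
Proof.
  induction t as [|[] t IH]; simpl; split; intro H; auto; try discriminate.
  - pose proof (code_bound t). lia.
  - apply IH in H. lia.
  - apply IH. lia.
Qed.

Lemma Pf_code s : Pf (str_code s) = Nat.b2n (prefb s).
Proof.
  unfold Pf. destruct s as [|[] t]; simpl prefb.
  - reflexivity.
  - replace (str_code (true :: t)) with (S (S (2 * str_code t))) by (simpl; lia).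
    replace (Nat.pred (S (S (2 * str_code t)))) with (S (2 * str_code t)) by lia.
    destruct (gf_spec (S (2 * str_code t))) as (K & HK & HKb). rewrite HK.
    pose proof (code_bound t) as Hb.
    assert (HKL : K = S (length t)).
    { eapply pow_unique. exact HKb. simpl. simpl in Hb. lia. }
    subst K. replace (S (S (2 * str_code t)) =? 0) with false by reflexivity.
    replace (2 <=? S (S (2 * str_code t))) with true by (symmetry; apply Nat.leb_le; lia).
    destruct (allf t) eqn:E.
    + apply allf_code in E. rewrite (proj2 (Nat.eqb_eq _ _)). reflexivity. simpl. lia.
    + rewrite (proj2 (Nat.eqb_neq _ _)). reflexivity. intro H. simpl in H.
      assert (allf t = true) by (apply allf_code; lia). congruence.
  - replace (str_code (false :: t)) with (S (2 * str_code t)) by (simpl; lia).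
    destruct (str_code t) as [|c] eqn:Ec. reflexivity.
    destruct (gf_spec (Nat.pred (S (2 * S c)))) as (K & HK & HKb). rewrite HK.
    replace (S (2 * S c) =? 0) with false by reflexivity.
    rewrite (proj2 (Nat.eqb_neq _ _)). cbn [Nat.b2n]. lia.
    intro H. destruct K. simpl in H. lia.
    rewrite Nat.pow_succ_r' in H. lia.
Qed.

Lemma prefb_app s c : prefb (s ++ [c]) = prefb s && Bool.eqb c (match length s with O => true | _ => false end).
Proof.
  destruct s as [|[] t]; simpl.
  - destruct c; auto.
  - unfold allf. rewrite forallb_app. simpl. destruct c; simpl; rewrite ?andb_true_r, ?andb_false_r; auto.
  - auto.
Qed.

Lemma gf_pos n : 1 <= gf n.
Proof. destruct (gf_spec n) as (K & -> & _). pose proof (Nat.pow_nonzero 2 K). lia. Qed.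

Open Scope R_scope.

Lemma zdec2 : zdec 2 = 1%Z.
Proof. reflexivity. Qed.
Lemma zdec0 : zdec 0 = 0%Z.
Proof. reflexivity. Qed.

Lemma key_ineq (q B N : nat) : INR q / INR (S B) <= 3 * (/2) ^ N <-> (q * 2 ^ N <= 3 * S B)%nat.
Proof.
  assert (HY : 0 < INR (S B)) by (apply lt_0_INR; lia).
  assert (HZ : INR (2 ^ N) = 2 ^ N) by (rewrite pow_INR; simpl; f_equal; lra).
  assert (HZp : 0 < 2 ^ N) by (apply pow_lt; lra).
  rewrite pow_inv. split; intro H.
  - apply INR_le. rewrite !mult_INR, HZ. replace (INR 3) with 3 by (simpl; lra).
    apply (Rmult_le_compat_r (INR (S B) * 2 ^ N)) in H; [|nra].
    replace (INR q / INR (S B) * (INR (S B) * 2 ^ N)) with (INR q * 2 ^ N) in H by (field; lra).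
    replace (3 * / 2 ^ N * (INR (S B) * 2 ^ N)) with (3 * INR (S B)) in H by (field; lra). exact H.
  - apply le_INR in H. rewrite !mult_INR, HZ in H. replace (INR 3) with 3 in H by (simpl; lra).
    apply (Rmult_le_reg_r (INR (S B) * 2 ^ N)); [nra|].
    replace (INR q / INR (S B) * (INR (S B) * 2 ^ N)) with (INR q * 2 ^ N) by (field; lra).
    replace (3 * / 2 ^ N * (INR (S B) * 2 ^ N)) with (3 * INR (S B)) by (field; lra). exact H.
Qed.

Lemma rat_even a b : Nat.even a = true -> exists q, a = (2 * q)%nat /\ rat_val a b = INR q / INR (S b).
Proof.
  intro He. apply Nat.even_spec in He as [q ->]. exists q. split; auto.
  unfold rat_val, zdec. rewrite Nat.even_mul. simpl Nat.even. rewrite Nat.mul_comm, Nat.div_mul by lia.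
  cbn [orb]. rewrite <- INR_IZR_INZ. auto.
Qed.

Lemma rat_odd a b : Nat.even a = false -> rat_val a b <= 0.
Proof.
  intro He. unfold rat_val, zdec. rewrite He. rewrite opp_IZR, <- INR_IZR_INZ.
  assert (0 < INR (S b)) by (apply lt_0_INR; lia). pose proof (pos_INR ((a + 1) / 2)).
  unfold Rdiv. assert (0 < / INR (S b)) by (apply Rinv_0_lt_compat; auto). nra.
Qed.

Lemma cond_le a b k : condf (npair a b) k <> 0%nat -> rat_val a b <= 3 * (/2) ^ (S (S k)).
Proof.
  rewrite condf_npair. intro H. pose proof (pow_lt (/2) (S (S k)) ltac:(lra)).
  destruct (Nat.even a) eqn:E.
  - destruct (rat_even a b E) as (q & -> & ->). apply key_ineq.
    destruct (Nat.leb_spec (2 * q * 2 ^ S k) (3 * S b)); cbn [Nat.b2n] in H; [|lia].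
    rewrite (Nat.pow_succ_r' 2 (S k)). lia.
  - pose proof (rat_odd a b E). lra.
Qed.

Lemma cond_ge a b k : rat_val a b <= 3 * (/2) ^ (S (S k)) -> condf (npair a b) k = 1%nat.
Proof.
  rewrite condf_npair. intro H. destruct (Nat.even a) eqn:E; [|lia].
  destruct (rat_even a b E) as (q & -> & Hr). rewrite Hr in H. apply key_ineq in H.
  rewrite (Nat.pow_succ_r' 2 (S k)) in H.
  destruct (Nat.leb_spec (2 * q * 2 ^ S k) (3 * S b)); cbn [Nat.b2n]; lia.
Qed.

Definition bb : nat -> bool := fun i => match i with O => true | _ => false end.
Definition dm (s : list bool) : R := if prefb s then 1 else 0.

Lemma dm_measure : is_measure dm.
Proof.
  split; [reflexivity|split].
  - intro s. unfold dm. destruct prefb; lra.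
  - intro s. unfold dm. rewrite !prefb_app.
    destruct (prefb s); simpl; [|lra]. destruct (length s); simpl; lra.
Qed.

Lemma map_bb_seq k n : map bb (seq (S k) n) = repeat false n.
Proof. revert k; induction n; intro k; simpl; auto. rewrite IHn. auto. Qed.

Lemma prefb_seg n : prefb (init_seg bb n) = true.
Proof.
  destruct n; auto. unfold init_seg. simpl. rewrite map_bb_seq. unfold allf.
  induction n; simpl; auto.
Qed.

Lemma allf_repeat t : allf t = true -> t = repeat false (length t).
Proof. induction t as [|[] t IH]; simpl; intro H; try discriminate; auto. rewrite IH; auto. rewrite repeat_length; auto. Qed.

Lemma seg_prefb s : prefb s = true -> s = init_seg bb (length s).
Proof.
  destruct s as [|[] t]; simpl; intro H; try discriminate; auto.
  unfold init_seg. simpl. rewrite map_bb_seq. f_equal. apply allf_repeat; auto.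
Qed.

Lemma seg_len x n : length (init_seg x n) = n.
Proof. unfold init_seg. rewrite length_map, length_seq. auto. Qed.

Lemma seg_prefix x j i : (j <= i)%nat -> is_prefix (init_seg x j) (init_seg x i).
Proof.
  intro H. unfold init_seg. exists (map x (seq j (i - j))).
  rewrite <- map_app. f_equal. replace i with (j + (i - j))%nat at 1 by lia.
  rewrite seq_app. auto.
Qed.

Lemma seg_extends x n : extends x (init_seg x n).
Proof.
  intros i Hi. rewrite seg_len in Hi. unfold init_seg.
  rewrite (nth_indep _ false (x 0%nat)) by (rewrite length_map, length_seq; auto).
  rewrite map_nth, seq_nth by auto. auto.
Qed.

Lemma sumR_nonneg_incl {A} (f : A -> R) (L M : list A) :
  (forall x, 0 <= f x) -> NoDup L -> incl L M -> sumR (map f L) <= sumR (map f M).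
Proof.
  intros Hf HN. revert M. induction HN as [|a L Ha HN IH]; intros M Hi.
  - simpl. clear Hi. induction M; simpl; auto. lra. pose proof (Hf a). lra.
  - assert (Hin : In a M) by (apply Hi; simpl; auto).
    apply in_split in Hin as (M1 & M2 & ->).
    assert (Hi' : incl L (M1 ++ M2)).
    { intros y Hy. assert (In y (M1 ++ a :: M2)) by (apply Hi; simpl; auto).
      apply in_app_or in H as [H|[H|H]]; apply in_or_app; auto. subst; contradiction. }
    specialize (IH _ Hi'). rewrite map_app, sumR_app in *. simpl. lra.
Qed.

Lemma allstr_complete k w : length w = k -> In w (allstr k).
Proof.
  revert w; induction k; intros w Hw.
  - destruct w; try discriminate. simpl; auto.
  - destruct (exists_last (l := w)) as (w' & c & ->). intro; subst; discriminate.
    rewrite length_app in Hw. simpl in Hw. simpl. apply in_flat_map. exists w'.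
    split. apply IHk; lia. destruct c; simpl; auto.
Qed.

Lemma sum_ext_le m (Hm : is_measure m) t n L : NoDup L ->
  (forall u, In u L -> length u = n /\ is_prefix t u) -> sumR (map m L) <= m t.
Proof.
  intros HN HL.
  rewrite <- (allstr_sum m Hm t (n - length t)), <- (map_map (fun w => t ++ w) m).
  apply sumR_nonneg_incl; auto. apply Hm.
  intros u Hu. destruct (HL u Hu) as (Hl & [w ->]). apply in_map. apply allstr_complete.
  rewrite length_app in Hl. lia.
Qed.

Lemma min_exists (P : nat -> Prop) : (exists j, P j) -> exists j, P j /\ forall i, P i -> (j <= i)%nat.
Proof.
  intros [j Hj]. induction j as [j IH] using (well_founded_induction lt_wf).
  destruct (classic (exists i, (i < j)%nat /\ P i)) as [[i [Hi Pi]]|Hn].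
  - apply (IH i Hi Pi).
  - exists j. split; auto. intros i Pi. destruct (Nat.lt_ge_cases i j); auto. exfalso; eauto.
Qed.

Open Scope R_scope.

Lemma Rabs_le_inv x a : Rabs x <= a -> -a <= x <= a.
Proof. intro H. pose proof (Rle_abs x). pose proof (Rle_abs (-x)). rewrite Rabs_Ropp in *. lra. Qed.

Lemma bin_partial_bb n : bin_partial bb (S n) = /2.
Proof. induction n; simpl in *. lra. rewrite IHn. lra. Qed.

Lemma bb_expansion : binary_expansion (/2) bb.
Proof.
  intros [|n]. simpl. lra. rewrite bin_partial_bb. pose proof (pow_lt (/2) (S n) ltac:(lra)). lra.
Qed.

Lemma dm_computable : computable_measure dm.
Proof.
  exists cDIRAC. intros s n. pose proof (DIRAC O0 (str_code s) [n]) as H.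
  rewrite Pf_code in H. unfold dm. pose proof (pow_lt (/2) n ltac:(lra)).
  destruct (prefb s); simpl in H.
  - exists 2%nat, 0%nat. split. exact H. unfold rat_val. rewrite zdec2. simpl.
    rewrite Rabs_R0 || idtac. replace (1 / 1 - 1) with 0 by lra. rewrite Rabs_R0. lra.
  - exists 0%nat, 0%nat. split. exact H. unfold rat_val. rewrite zdec0. simpl.
    replace (0 / 1 - 0) with 0 by lra. rewrite Rabs_R0. lra.
Qed.

Lemma dm_MLR : MLR O0 dm bb.
Proof.
  intros e HT Hc. destruct (Hc 1%nat) as (s & Hs & Hx).
  specialize (HT 1%nat (length s) [s]).
  assert (Hp : prefb s = true).
  { apply extends_seg in Hx. rewrite <- Hx. apply prefb_seg. }
  assert (sumR (map dm [s]) <= (/2) ^ 1).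
  { apply HT. repeat constructor; simpl; tauto. intros t [<-|[]]. split; auto.
    exists s. split; auto. exists []. rewrite app_nil_r; auto. }
  simpl in H. unfold dm in H. rewrite Hp in H. lra.
Qed.

Lemma bb_proper : proper bb.
Proof. exists dm. split. apply dm_measure. split. apply dm_computable. apply dm_MLR. Qed.

Lemma bb_not_cp : ~ continuously_proper bb.
Proof.
  intros (m & Hm & [em Hem] & Hat & Hmlr).
  assert (HA : forall k s, level O0 (CMu (cH em)) k s -> prefb s = true /\ m s <= (/2) ^ k).
  { intros k s [y Hy]. inversion Hy; subst.
    destruct (Hem s (S (S k))) as (a & b & Ha & Hb).
    pose proof (H_ok O0 em y k (str_code s) _ Ha) as H2.
    pose proof (eval_det O0 _ _ _ _ H0 H2) as E.
    rewrite Pf_code in E. destruct (prefb s); cbn [Nat.b2n] in E; [|lia].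
    split; auto. assert (condf (npair a b) k <> 0%nat) by lia.
    apply cond_le in H. apply Rabs_le_inv in Hb.
    replace ((/2) ^ S (S k)) with ((/2)^k * / 4) in * by (simpl; field). lra. }
  apply (Hmlr (CMu (cH em))).
  - intros k n L HN HL. destruct L as [|u0 L0].
    { cbn [map sumR]. pose proof (pow_lt (/2) k ltac:(lra)). lra. }
    set (P := fun j => (j <= n)%nat /\ level O0 (CMu (cH em)) k (init_seg bb j)).
    assert (HP : exists j, P j).
    { destruct (HL u0 (or_introl eq_refl)) as (Hl & s & Hs & Hp).
      destruct (HA k s Hs) as [Hpf _]. exists (length s). split.
      apply prefix_len in Hp. lia. rewrite <- (seg_prefb s Hpf). auto. }
    destruct (min_exists P HP) as (j0 & [Hj0 Hlev] & Hmin).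
    apply (Rle_trans _ (m (init_seg bb j0))).
    + apply (sum_ext_le m Hm _ n); auto. intros u Hu. destruct (HL u Hu) as (Hl & s & Hs & Hp).
      split; auto. destruct (HA k s Hs) as [Hpf _].
      assert (Pj : P (length s)). { split. apply prefix_len in Hp. lia. rewrite <- (seg_prefb s Hpf). auto. }
      apply (prefix_trans _ s); auto. rewrite (seg_prefb s Hpf). apply seg_prefix. apply Hmin; auto.
    + apply (HA k _ Hlev).
  - intros k. destruct (Hat bb ((/2) ^ S (S k))) as [n Hn]. { apply Rlt_gt, pow_lt; lra. }
    exists (init_seg bb n). split; [|apply seg_extends].
    destruct (Hem (init_seg bb n) (S (S k))) as (a & b & Ha & Hb).
    apply Rabs_le_inv in Hb.
    assert (Hc : condf (npair a b) k = 1%nat).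
    { apply cond_ge. pose proof (pow_lt (/2) (S (S k)) ltac:(lra)). lra. }
    pose proof (H_ok O0 em 0 k _ _ Ha) as H2. rewrite Hc, Pf_code, prefb_seg in H2. simpl in H2.
    exists 0%nat. constructor. exact H2. intros z Hz. lia.
Qed.

Lemma uni_computable : computable_measure (bernoulli (/2)).
Proof.
  exists cUNI. intros s n. pose proof (UNI O0 (str_code s) [n]) as H.
  rewrite gf_code in H. pose proof (Nat.pow_nonzero 2 (length s) ltac:(lia)).
  exists 2%nat, (2 ^ length s - 1)%nat. split.
  - eapply ev_eq. exact H. rewrite npair_tri. replace (2 + (2 ^ length s - 1))%nat with (S (2 ^ length s)) by lia. lia.
  - unfold rat_val. rewrite zdec2, bern_half. replace (S (2 ^ length s - 1)) with (2 ^ length s)%nat by lia.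
    rewrite pow_INR, pow_inv. simpl IZR. replace (INR 2) with 2 by (simpl; lra).
    replace (1 / 2 ^ length s - / 2 ^ length s) with 0 by lra. rewrite Rabs_R0.
    apply pow_le; lra.
Qed.

Lemma uni_atomless : atomless (bernoulli (/2)).
Proof.
  intros z eps Heps. destruct (pow_lt_1_zero (/2) ltac:(rewrite Rabs_right; lra) eps Heps) as [N HN].
  exists N. rewrite bern_half, seg_len. specialize (HN N (le_n N)).
  rewrite Rabs_right in HN. auto. apply Rle_ge, pow_le; lra.
Qed.

Open Scope R_scope.

Theorem mainTheorem6 :
  exists (r : R) (b : nat -> bool),
    0 <= r <= 1 /\ binary_expansion r b /\
    proper b /\ ~ continuously_proper b /\
    exists x : nat -> bool,
      MLR (oracle_of b) (bernoulli r) x /\ continuously_proper x.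
Proof.
  exists (/2), bb. split. lra. split. apply bb_expansion. split. apply bb_proper.
  split. apply bb_not_cp.
  destruct (random_exists bb) as [x [H1 H2]]. exists x. split. exact H2.
  exists (bernoulli (/2)). split. apply bern_half_measure. split. apply uni_computable.
  split. apply uni_atomless. exact H1.
Qed.
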